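(* Let $m\ge 2$ and $1\le\ell<m$. For the Borda rule (scoring function $\alpha_i=m-i$), the optimal truncated-ballot algorithm applied to $\ell$-truncated elections is an approximation algorithm with approximation ratio $\frac{\ell}{m+\frac{\ell}{m-1}\cdot\ell}$: for every election $E$, the returned candidate $w$ satisfies $\mathrm{sc}_\lambda(w)\ge\frac{\ell}{m+\ell^2/(m-1)}\max_{c\in C}\mathrm{sc}_\lambda(c)$.
   Context: An election consists of a set $V$ of $n$ voters and a set $C$ of $m$ candidates; each voter $v$ has a strict linear order over $C$, and $\mathrm{pos}_v(c)$ is the position of $c$ (1 = top). For scoring function $\lambda(i)=\alpha_i$, $\mathrm{sc}_\lambda(c)=\sum_{v}\lambda(\mathrm{pos}_v(c))$. The $\ell$-truncation reveals for each voter only her top $\ell$ candidates in order. Let $\mathrm{occ}(c)$ be the number of voters ranking $c$ among their top $\ell$ and $T(c)=\sum_{v:\,\mathrm{pos}_v(c)\le\ell}\alpha_{\mathrm{pos}_v(c)}$; $\mathrm{worst}(c)=T(c)+(n-\mathrm{occ}(c))\alpha_m$, $\mathrm{best}(c)=T(c)+(n-\mathrm{occ}(c))\alpha_{\ell+1}$. Optimal truncated-ballot algorithm: let $a$ maximize $\mathrm{worst}$, $b_1$ maximize $\mathrm{best}$, and $b_2$ maximize $\mathrm{best}$ over $C\setminus\{b_1\}$; return $a$ if $\mathrm{worst}(a)/\mathrm{best}(b_1)\ge\mathrm{worst}(b_1)/\mathrm{best}(b_2)$, else $b_1$. *)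

(* Defs.v *)
From HB Require Import structures.
From mathcomp Require Import all_boot all_order all_algebra all_fingroup.
Set Implicit Arguments. Unset Strict Implicit. Unset Printing Implicit Defensive.
Import Order.TTheory GRing.Theory Num.Theory.

(* Voter v's strict linear order is the permutation [E v] : {perm 'I_m};
   [E v c] is the 0-based rank of c, so pos_v(c) = (E v c).+1 (1 = top). *)
Definition election (n m : nat) := 'I_n -> {perm 'I_m}.

Definition pos n m (E : election n m) (v : 'I_n) (c : 'I_m) : nat := (E v c).+1.

(* scoring function lambda(i) = alpha_i, positions are 1-based *)
Definition score n m (lam : nat -> nat) (E : election n m) (c : 'I_m) : nat :=
  \sum_(v < n) lam (pos E v c).

Definition borda (m : nat) : nat -> nat := fun i => m - i.

(* Quantities computable from the l-truncation *)
Definition occ n m (l : nat) (E : election n m) (c : 'I_m) : nat :=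
  #|[set v : 'I_n | pos E v c <= l]|.

Definition Ttop n m (lam : nat -> nat) (l : nat) (E : election n m) (c : 'I_m) : nat :=
  \sum_(v < n | pos E v c <= l) lam (pos E v c).

Definition worst n m (lam : nat -> nat) (l : nat) (E : election n m) (c : 'I_m) : nat :=
  Ttop lam l E c + (n - occ l E c) * lam m.

Definition best n m (lam : nat -> nat) (l : nat) (E : election n m) (c : 'I_m) : nat :=
  Ttop lam l E c + (n - occ l E c) * lam l.+1.

(* [w] is a possible output of the optimal truncated-ballot algorithm
   (for any admissible choice of the maximizers a, b1, b2). *)
Definition trunc_alg_output n m (lam : nat -> nat) (l : nat) (E : election n m)
    (w : 'I_m) : Prop :=
  exists a b1 b2 : 'I_m,
    [/\ forall c, worst lam l E c <= worst lam l E a,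
        forall c, best lam l E c <= best lam l E b1,
        b2 != b1,
        forall c, c != b1 -> best lam l E c <= best lam l E b2 &
        w = if ((worst lam l E b1)%:R / (best lam l E b2)%:R
                  <= (worst lam l E a)%:R / (best lam l E b1)%:R :> rat)%R
            then a else b1].

(* Main.v *)
Require Import Defs.
From HB Require Import structures.
From mathcomp Require Import all_boot all_order all_algebra all_fingroup.
From mathcomp Require Import zify ring.
Import Order.TTheory GRing.Theory Num.Theory.
Lemma arith m l n W T x : 0 < l -> l < m -> T <= W -> T <= x * (m-1) -> x <= n ->
  n * l * (m-l) <= m * W -> l * (m-1) * (T + (n-x) * (m-l-1)) <= (m * (m-1)+l * l) * W.
Proof.
move=> l0 lm TW Tx xn avg.
have [j Hm] : exists j, m = (l + j).+1 by exists (m - l).-1; lia.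
have [y Hn] : exists y, n = x + y by exists (n - x); lia.
subst m n.
have e1 : (l + j).+1 - 1 = l + j by lia.
have e2 : (l + j).+1 - l - 1 = j by lia.
have e3 : x + y - x = y by lia.
have e4 : (l + j).+1 - l = j.+1 by lia.
rewrite e1 e2 e3 e4 in Tx avg  * .
have h1 : (l+j) * (T + y * j) <= T * l + (x+y) * (l+j) * j by nia.
have h2 : l * (x+y) * (l+j) * j <= (l+j) * W * (l+j).+1 by nia.
nia.
Qed.

Section S.
Variables (m l n : nat) (E : election n m).
Hypothesis Hlm : l < m.

Lemma score_split c : score (borda m) E c = Ttop (borda m) l E c +
   \sum_(v | ~~ (pos E v c <= l)) borda m (pos E v c).
Proof. by rewrite /score (bigID (fun v => pos E v c <= l)). Qed.

Lemma worstE c : worst (borda m) l E c = Ttop (borda m) l E c.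
Proof. by rewrite /worst /borda subnn muln0 addn0. Qed.

Lemma worst_le c : worst (borda m) l E c <= score (borda m) E c.
Proof. by rewrite worstE score_split leq_addr. Qed.

Lemma card_not c : #|[pred v | ~~ (pos E v c <= l)]| = n - occ l E c.
Proof.
have := cardC [set v | pos E v c <= l]; rewrite card_ord /occ => H.
have -> : #|[pred v | ~~ (pos E v c <= l)]| = #|[predC [set v | pos E v c <= l]]|.
  by apply: eq_card => v; rewrite !inE.
by apply: (canRL (addKn _)); rewrite H.
Qed.

Lemma score_le_best c : score (borda m) E c <= best (borda m) l E c.
Proof.
rewrite score_split /best leq_add2l -card_not -sum_nat_const.
apply: leq_sum => v /= Hv; rewrite /borda; apply: leq_sub2l; by rewrite ltnNge.
Qed.

Lemma Ttop_le c : Ttop (borda m) l E c <= occ l E c * (m - 1).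
Proof.
rewrite /Ttop /occ.
have -> : #|[set v | pos E v c <= l]| = #|[pred v | pos E v c <= l]|.
  by apply: eq_card => v; rewrite !inE.
rewrite -sum_nat_const; apply: leq_sum => v _; rewrite /borda; exact: leq_sub2l.
Qed.

Lemma occ_le c : occ l E c <= n.
Proof. by have := max_card (mem [set v | pos E v c <= l]); rewrite card_ord. Qed.

Lemma sum_Ttop : n * (l * (m - l)) <= \sum_(c < m) Ttop (borda m) l E c.
Proof.
rewrite /Ttop.
under eq_bigr do rewrite big_mkcond.
rewrite exchange_big /= -[n in n * _]card_ord -sum_nat_const.
apply: leq_sum => v _; rewrite -big_mkcond /=.
have -> : \sum_(c < m | pos E v c <= l) borda m (pos E v c) =
          \sum_(i < m | i.+1 <= l) (m - i.+1).
  by rewrite [RHS](reindex_perm (E v)).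
have -> : l * (m - l) = \sum_(i < m | i < l) (m - l).
  rewrite -(@big_ord_widen_cond nat 0 addn l m xpredT (fun _ => m - l) (ltnW Hlm)).
  by rewrite sum_nat_const card_ord.
apply: leq_sum => i Hi; apply: leq_sub2l; exact: Hi.
Qed.
End S.

Theorem corollary6 (m l n : nat) (Hm : 2 <= m) (Hl1 : 1 <= l) (Hlm : l < m)
    (E : election n m) (w : 'I_m) :
  trunc_alg_output (borda m) l E w ->
  ((l%:R / (m%:R + l%:R / (m.-1)%:R * l%:R)) * (\max_(c : 'I_m) score (borda m) E c)%:R
     <= (score (borda m) E w)%:R :> rat)%R.
Proof.
move=> [a [b1 [b2 [Ha Hb1 Hb2ne Hb2 ->]]]].
have [cs ->] := @bigop.eq_bigmax (ordinal m) (score (borda m) E) (ltac:(rewrite card_ord; lia)).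
set W := worst (borda m) l E a.
set B1 := best (borda m) l E b1.
set B2 := best (borda m) l E b2.
set Tb := worst (borda m) l E b1.
set D := m * (m - 1) + l * l.
have KA : l * (m - 1) * B1 <= D * W.
  have avg : n * l * (m - l) <= m * W.
    rewrite -mulnA (leq_trans (@sum_Ttop _ _ _ E Hlm)) //.
    rewrite -[m in m * W]card_ord -sum_nat_const.
    apply: leq_sum => c _; rewrite -worstE; exact: Ha.
  have := @arith m l n W (Ttop (borda m) l E b1) (occ l E b1) Hl1 Hlm
    (ltac:(rewrite -worstE; exact: Ha)) (@Ttop_le _ _ _ E b1) (@occ_le _ _ _ E b1) avg.
  rewrite /B1 /best /borda.
  have -> : m - l.+1 = m - l - 1 by lia.
  by [].
have rho : ((l%:R / (m%:R + l%:R / (m.-1)%:R * l%:R) : rat)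
     = (l * (m - 1))%:R / D%:R)%R.
  have hm1 : ((m.-1)%:R != 0 :> rat)%R by rewrite pnatr_eq0; lia.
  have hD : ((m%:R * (m.-1)%:R + l%:R * l%:R) != 0 :> rat)%R.
    by rewrite -!natrM -natrD pnatr_eq0; lia.
  rewrite /D subn1 natrD !natrM.
  by field; rewrite hD hm1.
have Dpos : 0 < D by rewrite /D; nia.
rewrite rho mulrAC ler_pdivrMr ?ltr0n // -!natrM ler_nat.
case: ifP => Hc.
  have h1 : score (borda m) E cs <= B1 := leq_trans (@score_le_best _ l _ E cs) (Hb1 cs).
  have h2 : W <= score (borda m) E a := @worst_le _ _ _ E a.
  rewrite (leq_trans (leq_mul (leqnn (l * (m - 1))) h1)) // (leq_trans KA) //.
  by rewrite mulnC leq_mul2r h2 orbT.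
case: (cs =P b1) => [-> | ne].
  rewrite [X in _ <= X]mulnC leq_mul2r; apply/orP; right; rewrite /D; nia.
have HO : score (borda m) E cs <= B2.
  by rewrite (leq_trans (@score_le_best _ l _ E cs)) // Hb2 //; apply/eqP.
have B2pos : 0 < B2.
  rewrite lt0n; apply/negP => /eqP H0; move: Hc; rewrite H0 invr0 mulr0.
  by rewrite divr_ge0 ?ler0n.
have B21 : B2 <= B1 by exact: Hb1.
have B1pos : 0 < B1 by exact: leq_trans B2pos B21.
have HWT : W * B2 < Tb * B1.
  move/negbT: Hc; rewrite -ltNge ltr_pdivrMr ?ltr0n // mulrAC ltr_pdivlMr ?ltr0n //.
  by rewrite -!natrM ltr_nat.
have key : l * (m - 1) * B2 * B1 <= D * Tb * B1.
  have h1 : l * (m - 1) * B1 * B2 <= D * W * B2 by rewrite leq_mul2r KA orbT.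
  have h2 : D * W * B2 <= D * Tb * B1.
    rewrite -!mulnA leq_mul2l; apply/orP; right; exact: ltnW.
  by move: (leq_trans h1 h2); rewrite mulnAC.
rewrite leq_pmul2r // in key.
rewrite (leq_trans (leq_mul (leqnn (l * (m - 1))) HO)) // (leq_trans key) // mulnC.
by rewrite leq_mul2r (@worst_le _ _ _ E b1) orbT.
Qed.
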